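(* Let $a_0,\ldots,a_4$ be elements of an algebraically closed field of characteristic $0$ with $a_0a_1a_2a_3a_4\neq 0$. Then the singular points of $S^{(a_0,\ldots,a_4)}$ are exactly the points of the form $$\Big(\tfrac{1}{\sqrt{a_0}} : (-1)^{i_1}\tfrac{1}{\sqrt{a_1}} : (-1)^{i_2}\tfrac{1}{\sqrt{a_2}} : (-1)^{i_3}\tfrac{1}{\sqrt{a_3}} : (-1)^{i_4}\tfrac{1}{\sqrt{a_4}}\Big),\qquad i_1,\ldots,i_4\in\{0,1\},$$ (for fixed choices of the square roots) which lie on the hyperplane $X_0+X_1+X_2+X_3+X_4=0$.
   Context: For coefficients $a_0,\ldots,a_4$ (not all zero), $S^{(a_0,\ldots,a_4)}$ denotes the cubic surface in $\mathbf{P}^4$ (with coordinates $X_0,\ldots,X_4$) defined by the system $a_0X_0^3+a_1X_1^3+a_2X_2^3+a_3X_3^3+a_4X_4^3=0$, $X_0+X_1+X_2+X_3+X_4=0$. *)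

(* Defs.v *)
From HB Require Import structures.
From mathcomp Require Import all_boot all_order all_algebra all_field.
Set Implicit Arguments. Unset Strict Implicit. Unset Printing Implicit Defensive.
Import Order.TTheory GRing.Theory Num.Theory.
Local Open Scope ring_scope.

(* Points of P^4 over K are represented by nonzero coordinate vectors
   x : 'I_5 -> K (homogeneous coordinates X_0..X_4), up to nonzero scaling. *)
Definition nonzero_vec (K : fieldType) (x : 'I_5 -> K) : Prop :=
  exists i, x i != 0.

Definition cubicF (K : fieldType) (a x : 'I_5 -> K) : K :=
  \sum_(i < 5) a i * x i ^+ 3.

Definition linG (K : fieldType) (x : 'I_5 -> K) : K := \sum_(i < 5) x i.

Definition on_surface (K : fieldType) (a x : 'I_5 -> K) : Prop :=
  cubicF a x = 0 /\ linG x = 0.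

Definition jacobian (K : fieldType) (a x : 'I_5 -> K) : 'M[K]_(2, 5) :=
  \matrix_(i < 2, j < 5) (if i == 0 then 3%:R * a j * x j ^+ 2 else 1).

(* Singular point of the complete intersection S^(a) (Jacobian criterion):
   a point of S where the Jacobian has rank < 2 (= codimension). *)
Definition singular_point (K : fieldType) (a x : 'I_5 -> K) : Prop :=
  on_surface a x /\ (\rank (jacobian a x) < 2)%N.

(* The candidate point ( 1/s_0 : (-1)^{e_1}/s_1 : ... : (-1)^{e_4}/s_4 ),
   where s_j is a chosen square root of a_j. *)
Definition cand_pt (K : fieldType) (s : 'I_5 -> K) (e : 'I_5 -> bool) : 'I_5 -> K :=
  fun j => (-1) ^+ e j * (s j)^-1.

(* Main.v *)
Require Import Defs.
From HB Require Import structures.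
From mathcomp Require Import all_boot all_order all_algebra all_field.
From mathcomp Require Import ring.
Import Order.TTheory GRing.Theory Num.Theory.
Local Open Scope ring_scope.

Theorem mainTheorem2 (K : closedFieldType) (hchar : [pchar K] =i pred0)
  (a : 'I_5 -> K) (ha : forall i, a i != 0)
  (s : 'I_5 -> K) (hs : forall i, s i ^+ 2 = a i)
  (x : 'I_5 -> K) (hx : nonzero_vec x) :
  singular_point a x <->
  exists e : 'I_5 -> bool,
    [/\ e ord0 = false,
        linG (cand_pt s e) = 0 &
        exists c : K, c != 0 /\ forall j, x j = c * cand_pt s e j].
Proof.
have h3 : (3%:R : K) != 0 by rewrite ((pcharf0P _).1 hchar 3).
have hs0 : forall i, s i != 0.
  by move=> i; apply/eqP=> h; move: (ha i); rewrite -hs h expr0n eqxx.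
split.
- move=> [[hF hG] hr].
  set A := jacobian a x.
  have : kermx A != 0.
    rewrite -mxrank_eq0 mxrank_ker; move: hr; rewrite -/A; case: (\rank A) => [|[|]] //.
  case/rowV0Pn => v /sub_kermxP hv vn0.
  have hvj : forall j, v 0 0 * (3%:R * a j * x j ^+ 2) + v 0 1 = 0.
    move=> j; move/matrixP: (hv) => /(_ 0 j).
    rewrite !mxE !big_ord_recr big_ord0 /= !mxE /= add0r mulr1 => <-.
    by congr (v 0 _ * _ + v 0 _); apply: val_inj.
  have v0 : v 0 0 != 0.
    apply/eqP=> h0; move: vn0; rewrite (_ : v = 0) ?eqxx //.
    apply/rowP=> k; rewrite mxE; case: k => [[|[|//]] Hk].
      by rewrite (_ : Ordinal Hk = 0) //; apply: val_inj.
    by rewrite (_ : Ordinal Hk = 1); [move: (hvj 0); rewrite h0 mul0r add0r|apply: val_inj].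
  set mu := - v 0 1 / v 0 0 / 3%:R.
  have hmu : forall j, a j * x j ^+ 2 = mu.
    move=> j; rewrite /mu; move: (hvj j) => /eqP; rewrite addr_eq0 => /eqP <-.
    by field; rewrite v0 h3.
  have mu0 : mu != 0.
    apply/eqP=> m0; case: hx => i; move: (hmu i); rewrite m0 => /eqP.
    by rewrite mulf_eq0 (negPf (ha i)) /= sqrf_eq0 => ->.
  set c := x 0 * s 0.
  have hc2 : forall j, (x j * s j) ^+ 2 = c ^+ 2.
    by move=> j; rewrite /c !exprMn !hs mulrC hmu mulrC hmu.
  have c0 : c != 0.
    apply/eqP=> h; move/eqP: mu0; apply.
    by rewrite -(hmu 0) -hs -exprMn mulrC -/c h expr0n.
  have hxj : forall j, x j = c * cand_pt s (fun j => x j * s j != c) j.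
    move=> j; rewrite /cand_pt; have /eqP := hc2 j; rewrite -subr_eq0 subr_sqr mulf_eq0.
    case/orP; rewrite ?subr_eq0 ?addr_eq0 => /eqP h.
      by rewrite h eqxx expr0 mul1r -h; field; rewrite hs0.
    rewrite h (_ : (- c != c) = true); last first.
      apply/negP => /eqP H; suff: c * 2%:R == 0 by rewrite mulf_eq0 (negPf c0) ((pcharf0P _).1 hchar 2).
      by rewrite mulr_natr mulr2n -{1}H addNr.
    by rewrite expr1 -[c]opprK -h; field; rewrite hs0.
  exists (fun j => x j * s j != c); split.
  + by rewrite /= /c eqxx.
  + apply/eqP; rewrite -(mulrI_eq0 _ (lregP c0)).
    rewrite /linG mulr_sumr; apply/eqP; rewrite -[RHS]hG /linG.
    by apply: eq_bigr => j _; rewrite -hxj.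
  + by exists c.
- case=> e [e0 hl [c [c0 hxc]]].
  have hax : forall j, a j * x j ^+ 2 = c ^+ 2.
    move=> j; rewrite hxc /cand_pt -(hs j) !exprMn -exprM mulnC exprM sqrrN expr1n.
    by rewrite expr1n; field; rewrite hs0.
  have hG : linG x = 0.
    by move: hl; rewrite /linG (eq_bigr _ (fun j _ => hxc j)) -mulr_sumr => ->; rewrite mulr0.
  split; first split => //.
  + rewrite /cubicF (eq_bigr (fun j => c ^+ 2 * x j)); last first.
      by move=> j _; rewrite exprSr mulrA hax.
    by move: hG; rewrite -mulr_sumr /linG => ->; rewrite mulr0.
  + have -> : jacobian a x = (\col_(i < 2) (if i == 0 then 3%:R * c ^+ 2 else 1)) *m const_mx 1.
      apply/matrixP=> i j; rewrite !mxE big_ord1 !mxE mulr1.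
      by case: (i == 0) => //; rewrite -mulrA hax.
    set u := \col_(i < 2) _.
    have h1 := mxrankM_maxl u (const_mx 1 : 'M[K]_(1, 5)).
    have h2 := rank_leq_col u.
    by rewrite ltnS; apply: leq_trans h1 h2.
Qed.
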